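(* For any locally-fixable problem on a dynamic graph $G=(V,E)$, if every node is valid just before the insertion or deletion of an edge $(u,v)$, then after the update a solution in which every node is valid can be obtained by changing the states of at most two nodes, and only the states of the endpoints $u$ and $v$ are changed.
   Context: A graph problem is specified by a set of states $S_v$ for each node $v$; each node picks a state $s(v)\in S_v$. It is locally-fixable if for each node $v$ there is a validity function $f_v$ deciding whether $v$ is valid, such that (i) the output of $f_v$ depends only on the states of $v$ and its neighbors, and (ii) for any assignment of states in which $v$ is invalid, one can change only the state of $v$ (keeping all neighbors' states fixed) so that $v$ becomes valid and no previously valid neighbor of $v$ becomes invalid. A solution is feasible iff all nodes are valid. *)

(* Defs.v *)
From mathcomp Require Import all_boot.
Set Implicit Arguments. Unset Strict Implicit. Unset Printing Implicit Defensive.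

Section Defs.
Variable V : finType.
Variable St : Type.

Definition sgraph (G : rel V) : Prop := symmetric G /\ irreflexive G.

Definition upd (s : V -> St) (v : V) (x : St) : V -> St :=
  fun w => if w == v then x else s w.

Definition admissible (S : V -> St -> Prop) (s : V -> St) : Prop :=
  forall w, S w (s w).

(* f G s v : validity of node v in graph G under assignment s.
   (i) locality: f_v depends only on v's neighbourhood and the states of v
       and its neighbours;
   (ii) fixability: an invalid node can be made valid by changing only its
       own state without invalidating any previously valid neighbour. *)
Definition locally_fixable (S : V -> St -> Prop)
    (f : rel V -> (V -> St) -> V -> bool) : Prop :=
  (forall (G G' : rel V) (s s' : V -> St) (v : V),
      sgraph G -> sgraph G' ->
      G v =1 G' v -> s v = s' v -> (forall w, G v w -> s w = s' w) ->
      f G s v = f G' s' v) /\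
  (forall (G : rel V), sgraph G -> forall s, admissible S s ->
     forall v, ~~ f G s v ->
     exists x, S v x /\ f G (upd s v x) v /\
       (forall w, G v w -> f G s w -> f G (upd s v x) w)).

Definition add_edge (G : rel V) (u v : V) : rel V :=
  fun x y => G x y || ((x == u) && (y == v)) || ((x == v) && (y == u)).

Definition del_edge (G : rel V) (u v : V) : rel V :=
  fun x y => G x y && ~~ (((x == u) && (y == v)) || ((x == v) && (y == u))).

(* after the update to G', a feasible solution is obtained from s by changing
   only the states of u and v (hence at most two nodes) *)
Definition fixable_at_endpoints (S : V -> St -> Prop)
    (f : rel V -> (V -> St) -> V -> bool) (G' : rel V) (s : V -> St) (u v : V) : Prop :=
  exists s' : V -> St, admissible S s' /\ (forall w, f G' s' w) /\
    (forall w, w != u -> w != v -> s' w = s w).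

End Defs.

(* Main.v *)
Require Import Defs.
From mathcomp Require Import all_boot.

Lemma fix1 (V : finType) (St : Type) (S : V -> St -> Prop)
    (f : rel V -> (V -> St) -> V -> bool) :
  locally_fixable S f -> forall G, sgraph G -> forall s, admissible S s ->
  forall a, exists s1, admissible S s1 /\ f G s1 a /\
    (forall w, w != a -> f G s w -> f G s1 w) /\ (forall w, w != a -> s1 w = s w).
Proof.
move=> [loc fx] G sG s adm a.
case fa: (f G s a).
  exists s; split=> //; split=> //; split=> //.
have [x [Sx [fxa Hn]]] := fx G sG s adm a (negbT fa).
exists (upd s a x); split.
  by move=> w; rewrite /upd; case: eqP => [->|].
split=> //; split; last by move=> w wa; rewrite /upd (negbTE wa).
move=> w wa fw.
case Gaw: (G a w); first exact: Hn.
rewrite -(loc G G s (upd s a x) w sG sG (fun _ => erefl)) //.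
  by rewrite /upd (negbTE wa).
move=> z Gwz; rewrite /upd; case: eqP => // za.
by move: Gwz; rewrite za (proj1 sG) Gaw.
Qed.

Arguments fix1 {V St S f}.

Lemma fix2 (V : finType) (St : Type) (S : V -> St -> Prop)
    (f : rel V -> (V -> St) -> V -> bool) G G' (u v : V) s :
  locally_fixable S f -> sgraph G -> sgraph G' -> admissible S s ->
  (forall w, f G s w) ->
  (forall w, w != u -> w != v -> G w =1 G' w) ->
  fixable_at_endpoints S f G' s u v.
Proof.
move=> lf sG sG' adm allv same.
have [s1 [a1 [f1 [p1 e1]]]] := fix1 lf _ sG' _ adm u.
have [s2 [a2 [f2 [p2 e2]]]] := fix1 lf _ sG' _ a1 v.
exists s2; split=> //; split.
  move=> w; case: (eqVneq w v) => [->|wv] //.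
  apply: p2 => //.
  case: (eqVneq w u) => [->|wu] //.
  apply: p1 => //.
  rewrite -(proj1 lf G G' s s w sG sG' (same w wu wv)) //.
by move=> w wu wv; rewrite e2 // e1.
Qed.

Arguments fix2 {V St S f G G' u v s}.

Theorem lemma11 (V : finType) (St : Type) (S : V -> St -> Prop)
    (f : rel V -> (V -> St) -> V -> bool) :
  locally_fixable S f ->
  forall (G : rel V), sgraph G ->
  forall (u v : V), u != v ->
  forall (s : V -> St), admissible S s -> (forall w, f G s w) ->
    (~~ G u v -> fixable_at_endpoints S f (add_edge G u v) s u v) /\
    (G u v -> fixable_at_endpoints S f (del_edge G u v) s u v).
Proof.
move=> lf G [sy ir] u v uv s adm allv; split=> _.
  apply: (fix2 lf (conj sy ir)) => //.
    split.
      move=> x y; rewrite /add_edge sy.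
      by rewrite [(y==u)&&_]andbC [(y==v)&&_]andbC -orbA [(_&&_) || _]orbC orbA.
    move=> x; rewrite /add_edge ir /=.
    case: (eqVneq x u) => [->|]; first by rewrite (negbTE uv).
    by move=> _; rewrite /= andbF.
  by move=> w wu wv z; rewrite /add_edge (negbTE wu) (negbTE wv) !orbF.
apply: (fix2 lf (conj sy ir)) => //.
  split.
    move=> x y; rewrite /del_edge sy.
    by rewrite [(y==u)&&_]andbC [(y==v)&&_]andbC [(_&&_) || _]orbC.
  by move=> x; rewrite /del_edge ir.
by move=> w wu wv z; rewrite /del_edge (negbTE wu) (negbTE wv) andbT.
Qed.
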